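(* Let $L = L_p + \varepsilon L_d \in \mathbb{DH}[t]$ be a line polynomial and $h \in \mathbb{R}[t]$ nonzero. Suppose there is a motion polynomial $C = P + \varepsilon D \in \mathbb{DH}[t]$ satisfying $$P\mathbf{k}\overline{P} = hL_p,\qquad -P\mathbf{k}\overline{D} - D\mathbf{k}\overline{P} = hL_d,\qquad P\overline{D} + D\overline{P} = 0,$$ and let $f \in \mathbb{R}[t]$ be a quadratic polynomial irreducible over $\mathbb{R}$ which divides $h/\gcd(\operatorname{rgcd}(L_p), h)$ and whose multiplicity as a factor of $h$ is one. Then there exists a motion polynomial $\tilde C = \tilde P + \varepsilon\tilde D$ satisfying the same three equations with $h$ replaced by $h/f$.
   Context: $\mathbb{H}$ denotes the real quaternions with units $\mathbf{i},\mathbf{j},\mathbf{k}$ and conjugation $\overline{p_0 + p_1\mathbf{i} + p_2\mathbf{j} + p_3\mathbf{k}} = p_0 - p_1\mathbf{i} - p_2\mathbf{j} - p_3\mathbf{k}$; $\mathbb{DH} = \mathbb{H} + \varepsilon\mathbb{H}$ with $\varepsilon^2=0$, $\varepsilon$ central. $\mathbb{H}[t]$, $\mathbb{DH}[t]$ are polynomial rings in a real indeterminate $t$ commuting with the coefficients; conjugation acts coefficientwise. A motion polynomial is $C = P + \varepsilon D \in \mathbb{DH}[t]$ with $P \ne 0$ and $P\overline{D} + D\overline{P} = 0$. A line polynomial is $L = L_p + \varepsilon L_d \in \mathbb{DH}[t]$ with $L_p, L_d$ vectorial (zero scalar part), $L_p\overline{L_d} + L_d\overline{L_p} = 0$, and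 $L_p \neq 0$. For $A \in \mathbb{H}[t]$, $\operatorname{rgcd}(A)$ is the monic gcd in $\mathbb{R}[t]$ of its four real coefficient polynomials. The three equations are equivalent to $C_\varepsilon\mathbf{k}\overline{C_\varepsilon} = hL$ (with $C_\varepsilon = P - \varepsilon D$) together with the Study condition. *)

(* Defs.v *)
From HB Require Import structures.
From mathcomp Require Import all_boot all_order all_algebra.
Set Implicit Arguments. Unset Strict Implicit. Unset Printing Implicit Defensive.
Import Order.TTheory GRing.Theory Num.Theory.
Local Open Scope ring_scope.

(* Quaternions with coefficients in a commutative ring T:
   Quat a0 a1 a2 a3 = a0 + a1 i + a2 j + a3 k.
   With T = {poly R}, quat {poly R} is H[t] (t central). *)
Record quat (T : Type) := Quat { q0 : T; q1 : T; q2 : T; q3 : T }.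

Section QuatOps.
Variable T : comRingType.

Definition qzero : quat T := Quat 0 0 0 0.
Definition qk : quat T := Quat 0 0 0 1.
Definition qadd (a b : quat T) : quat T :=
  Quat (q0 a + q0 b) (q1 a + q1 b) (q2 a + q2 b) (q3 a + q3 b).
Definition qopp (a : quat T) : quat T :=
  Quat (- q0 a) (- q1 a) (- q2 a) (- q3 a).
Definition qscale (c : T) (a : quat T) : quat T :=
  Quat (c * q0 a) (c * q1 a) (c * q2 a) (c * q3 a).
Definition qconj (a : quat T) : quat T :=
  Quat (q0 a) (- q1 a) (- q2 a) (- q3 a).
(* Hamilton product: i^2 = j^2 = k^2 = ijk = -1 *)
Definition qmul (a b : quat T) : quat T :=
  Quat (q0 a * q0 b - q1 a * q1 b - q2 a * q2 b - q3 a * q3 b)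
       (q0 a * q1 b + q1 a * q0 b + q2 a * q3 b - q3 a * q2 b)
       (q0 a * q2 b - q1 a * q3 b + q2 a * q0 b + q3 a * q1 b)
       (q0 a * q3 b + q1 a * q2 b - q2 a * q1 b + q3 a * q0 b).
Definition qvectorial (a : quat T) : Prop := q0 a = 0.
End QuatOps.

Definition hpoly (R : rcfType) := quat {poly R}.

Definition is_motion_poly (R : rcfType) (P D : hpoly R) : Prop :=
  P <> qzero _ /\
  qadd (qmul P (qconj D)) (qmul D (qconj P)) = qzero _.

Definition is_line_poly (R : rcfType) (Lp Ld : hpoly R) : Prop :=
  qvectorial Lp /\ qvectorial Ld /\
  qadd (qmul Lp (qconj Ld)) (qmul Ld (qconj Lp)) = qzero _ /\
  Lp <> qzero _.

Definition rgcd (R : rcfType) (A : hpoly R) : {poly R} :=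
  let g := gcdp (gcdp (gcdp (q0 A) (q1 A)) (q2 A)) (q3 A) in
  (lead_coef g)^-1 *: g.

Definition three_eqs (R : rcfType) (P D Lp Ld : hpoly R) (h : {poly R}) : Prop :=
  qmul (qmul P (qk _)) (qconj P) = qscale h Lp /\
  qopp (qadd (qmul (qmul P (qk _)) (qconj D)) (qmul (qmul D (qk _)) (qconj P)))
    = qscale h Ld /\
  qadd (qmul P (qconj D)) (qmul D (qconj P)) = qzero _.

(* Main.v *)
Require Import Defs.
From HB Require Import structures.
From mathcomp Require Import all_boot all_order all_algebra.
From mathcomp Require Import ring complex.
Import Order.TTheory GRing.Theory Num.Theory.
Set Implicit Arguments. Unset Strict Implicit. Unset Printing Implicit Defensive.
Local Open Scope ring_scope.

Section QL.
Variable T : comRingType.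
Implicit Types X Y A B : quat T.

Definition B1 X Y := qmul X (qconj Y).
Definition Bk X Y := qmul (qmul X (qk T)) (qconj Y).
Definition qi : quat T := Quat 0 1 0 0.

Ltac qsolve := rewrite /B1 /Bk /qmul /qconj /qscale /qadd /qopp /qk /qi /qzero /=; congr Quat; ring.

Lemma B1_scale a b X Y : B1 (qscale a X) (qscale b Y) = qscale (a * b) (B1 X Y).
Proof. case: X => ????; case: Y => ????; qsolve. Qed.
Lemma Bk_scale a b X Y : Bk (qscale a X) (qscale b Y) = qscale (a * b) (Bk X Y).
Proof. case: X => ????; case: Y => ????; qsolve. Qed.
Lemma B1_Q u w X Y : B1 (qmul X (Quat u 0 0 (- w))) (qmul Y (Quat u 0 0 (- w)))
   = qscale (u ^+ 2 + w ^+ 2) (B1 X Y).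
Proof. case: X => ????; case: Y => ????; qsolve. Qed.
Lemma Bk_Q u w X Y : Bk (qmul X (Quat u 0 0 (- w))) (qmul Y (Quat u 0 0 (- w)))
   = qscale (u ^+ 2 + w ^+ 2) (Bk X Y).
Proof. case: X => ????; case: Y => ????; qsolve. Qed.
Lemma B1_i X Y : B1 (qmul X qi) (qmul Y qi) = B1 X Y.
Proof. case: X => ????; case: Y => ????; qsolve. Qed.
Lemma Bk_i X Y : Bk (qmul X qi) (qmul Y qi) = qopp (Bk X Y).
Proof. case: X => ????; case: Y => ????; qsolve. Qed.
Lemma qscaleD c A B : qscale c (qadd A B) = qadd (qscale c A) (qscale c B).
Proof. case: A => ????; case: B => ????; qsolve. Qed.
Lemma qscaleN c A : qscale c (qopp A) = qopp (qscale c A).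
Proof. case: A => ????; qsolve. Qed.
Lemma qscaleNl c A : qopp (qscale c A) = qscale (- c) A.
Proof. case: A => ????; qsolve. Qed.
Lemma qscaleA a b A : qscale a (qscale b A) = qscale (a * b) A.
Proof. case: A => ????; qsolve. Qed.
Lemma qscale0 c : qscale c (qzero T) = qzero T.
Proof. qsolve. Qed.
Lemma qscale0l A : qscale 0 A = qzero T.
Proof. case: A => ????; qsolve. Qed.
Lemma qopp0 : qopp (qzero T) = qzero T.
Proof. qsolve. Qed.
Lemma qoppD A B : qadd (qopp A) (qopp B) = qopp (qadd A B).
Proof. case: A => ????; case: B => ????; qsolve. Qed.
Lemma qoppK A : qopp (qopp A) = A.
Proof. case: A => ????; qsolve. Qed.
Lemma qscale1 A : qscale 1 A = A.
Proof. case: A => ????; qsolve. Qed.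
Lemma qmul_scaler c X Y : qmul X (qscale c Y) = qscale c (qmul X Y).
Proof. case: X => ????; case: Y => ????; qsolve. Qed.
Lemma Bk00 : Bk (qzero T) (qzero T) = qzero T.
Proof. qsolve. Qed.
End QL.
Arguments qi {T}.

Lemma qscale_inj (T : idomainType) (c : T) (A B : quat T) :
  c != 0 -> qscale c A = qscale c B -> A = B.
Proof.
move=> c0; case: A => a0 a1 a2 a3; case: B => b0 b1 b2 b3 [].
by move=> /(mulfI c0) -> /(mulfI c0) -> /(mulfI c0) -> /(mulfI c0) ->.
Qed.

Lemma qscale_eq0 (T : idomainType) (c : T) (A : quat T) :
  c != 0 -> qscale c A = qzero T -> A = qzero T.
Proof. by move=> c0 H; apply: (qscale_inj c0); rewrite H qscale0. Qed.

Lemma mul2_eq0 {F : fieldType} {x : F} : (2:F) != 0 -> 2 * x = 0 -> x = 0.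
Proof. by move=> H2 /eqP; rewrite mulf_eq0 (negbTE H2) => /eqP. Qed.

Lemma key_field (F : fieldType) (ii : F) (Hi : ii*ii = -1) (H2 : (2:F) != 0) (p e : quat F) :
  Bk p p = qzero F -> qadd (B1 p e) (B1 e p) = qzero F ->
  qadd (Bk p e) (Bk e p) = qzero F -> p <> qzero F ->
  exists2 s : F, (s = 1 \/ s = -1) &
    qmul p (Quat ii 0 0 (-s)) = qzero F /\ qmul e (Quat ii 0 0 (-s)) = qzero F.
Proof.
move: p e => [a b c d] [e0 e1 e2 e3].
rewrite /Bk/B1/qmul/qconj/qadd/qk/qzero/= => -[h0 h1 h2 h3] [g0 g1 g2 g3] [k0 k1 k2 k3] pn0.
have H1 : a*c + b*d = 0 by apply: (mul2_eq0 H2); rewrite -h1; ring.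
have H2' : c*d - a*b = 0 by apply: (mul2_eq0 H2); rewrite -h2; ring.
have H3 : a^+2 + d^+2 = b^+2 + c^+2.
  by apply/eqP; rewrite -subr_eq0 -h3; apply/eqP; ring.
have HA : a^+2 + d^+2 = 0.
  have : (a^+2+d^+2) * (b^+2+c^+2) = 0.
    have -> : (a^+2+d^+2) * (b^+2+c^+2) = (a*c+b*d)*(a*c+b*d) + (c*d-a*b)*(c*d-a*b) by ring.
    by rewrite H1 H2' !mul0r addr0.
  by rewrite -H3 => /eqP; rewrite mulf_eq0 orbb => /eqP.
have HB : b^+2 + c^+2 = 0 by rewrite -H3.
have Hd : d = ii * a \/ d = - (ii * a).
  have : (d - ii*a) * (d + ii*a) = 0 by rewrite -HA; ring: Hi.
  move/eqP; rewrite mulf_eq0 subr_eq0 addr_eq0 => /orP[]/eqP; auto.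
have Hc : c = ii * b \/ c = - (ii * b).
  have : (c - ii*b) * (c + ii*b) = 0 by rewrite -HB; ring: Hi.
  move/eqP; rewrite mulf_eq0 subr_eq0 addr_eq0 => /orP[]/eqP; auto.
have [σ [Hσ [Hσc [Hσd Hσv]]]] : exists σ, σ*σ = -1 /\ c = σ*b /\ d = -(σ*a) /\ (σ = ii \/ σ = -ii).
  have Hmi : (-ii) * (-ii) = -1 by rewrite mulrNN.
  case: Hd => Hd; case: Hc => Hc.
  - have : 2*(a*b) = -(c*d - a*b) by rewrite Hc Hd; ring: Hi.
    rewrite H2' oppr0 => /(mul2_eq0 H2) /eqP; rewrite mulf_eq0 => /orP[]/eqP Hab.
      exists ii; do !split; auto; by rewrite Hd Hab !mulr0 oppr0.
    exists (-ii); do !split; auto; [by rewrite Hc Hab !mulr0 | by rewrite Hd mulNr opprK].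
  - exists (-ii); do !split; auto; [by rewrite Hc mulNr | by rewrite Hd mulNr opprK].
  - exists ii; do !split; auto.
  - have : 2*(a*b) = -(c*d - a*b) by rewrite Hc Hd; ring: Hi.
    rewrite H2' oppr0 => /(mul2_eq0 H2) /eqP; rewrite mulf_eq0 => /orP[]/eqP Hab.
      exists (-ii); do !split; auto; [by rewrite Hc mulNr | by rewrite Hd Hab !mulr0 oppr0].
    exists ii; do !split; auto; by rewrite Hc Hab !mulr0 oppr0.
subst c d.
have σ0 : σ != 0 by apply/eqP => s0; move: Hσ; rewrite s0 mul0r => /eqP; rewrite eq_sym oppr_eq0 oner_eq0.
have K1 : b*(e3 + σ*e0) + a*(e2 - σ*e1) = 0 by apply: (mul2_eq0 H2); rewrite -k1; ring: Hσ.
have K2 : σ*(b*(e3 + σ*e0) - a*(e2 - σ*e1)) = 0 by apply: (mul2_eq0 H2); rewrite -k2; ring: Hσ.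
have K3 : σ*(a*(e3 + σ*e0) + b*(e2 - σ*e1)) = 0 by apply: (mul2_eq0 H2); rewrite -[RHS]oppr0 -k3; ring: Hσ.
have G0 : σ*(b*(e2 - σ*e1) - a*(e3 + σ*e0)) = 0 by apply: (mul2_eq0 H2); rewrite -g0; ring: Hσ.
move/eqP: K2; rewrite mulf_eq0 (negbTE σ0) /= => /eqP K2.
move/eqP: K3; rewrite mulf_eq0 (negbTE σ0) /= => /eqP K3.
move/eqP: G0; rewrite mulf_eq0 (negbTE σ0) /= => /eqP G0.
set u := e3 + σ*e0 in K1 K2 K3 G0. set v := e2 - σ*e1 in K1 K2 K3 G0.
have Hbu : b*u = 0.
  apply: (mul2_eq0 H2); have -> : 2*(b*u) = (b*u+a*v) + (b*u - a*v) by ring.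
  by rewrite K1 K2 addr0.
have Hav : a*v = 0.
  apply: (mul2_eq0 H2); have -> : 2*(a*v) = (b*u+a*v) - (b*u - a*v) by ring.
  by rewrite K1 K2 subr0.
have Hau : a*u = 0.
  apply: (mul2_eq0 H2); have -> : 2*(a*u) = (a*u+b*v) - (b*v - a*u) by ring.
  by rewrite K3 G0 subr0.
have Hbv : b*v = 0.
  apply: (mul2_eq0 H2); have -> : 2*(b*v) = (a*u+b*v) + (b*v - a*u) by ring.
  by rewrite K3 G0 addr0.
have [u0 v0] : u = 0 /\ v = 0.
  have [a0|a0] := eqVneq a 0.
    have b0 : b != 0.
      by apply/eqP => b0; apply: pn0; rewrite a0 b0 !mulr0 oppr0.
    move/eqP: Hbu; move/eqP: Hbv; rewrite !mulf_eq0 (negbTE b0) /= => /eqP -> /eqP -> //.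
  move/eqP: Hau; move/eqP: Hav; rewrite !mulf_eq0 (negbTE a0) /= => /eqP -> /eqP -> //.
have He3 : e3 = -(σ*e0) by apply/eqP; rewrite -addr_eq0; apply/eqP; exact: u0.
have He2 : e2 = σ*e1 by apply/eqP; rewrite -subr_eq0; apply/eqP; exact: v0.
rewrite He3 He2.
case: Hσv => ->; [exists 1 | exists (-1)]; auto; split; rewrite /qmul/qzero/=; congr Quat; ring: Hi.
Qed.

Section Ev.
Variable R : rcfType.
Local Notation C := (R[i])%type.

Definition ev (z : C) (r : {poly R}) : C := (map_poly (real_complex R) r).[z].
Definition qev z (X : hpoly R) : quat C :=
  Quat (ev z (q0 X)) (ev z (q1 X)) (ev z (q2 X)) (ev z (q3 X)).
Definition qdivf (f : {poly R}) (X : hpoly R) : hpoly R :=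
  Quat (q0 X %/ f) (q1 X %/ f) (q2 X %/ f) (q3 X %/ f).

Lemma evD z a b : ev z (a + b) = ev z a + ev z b.
Proof. by rewrite /ev rmorphD hornerD. Qed.
Lemma evN z a : ev z (- a) = - ev z a.
Proof. by rewrite /ev rmorphN hornerN. Qed.
Lemma evM z a b : ev z (a * b) = ev z a * ev z b.
Proof. by rewrite /ev rmorphM hornerM. Qed.
Lemma evC z c : ev z c%:P = (c%:C)%C.
Proof. by rewrite /ev map_polyC hornerC. Qed.
Lemma evX z : ev z 'X = z.
Proof. by rewrite /ev map_polyX hornerX. Qed.
Lemma ev0 z : ev z 0 = 0.
Proof. by rewrite -[0]/(0%:P) evC rmorph0. Qed.
Lemma ev1 z : ev z 1 = 1.
Proof. by rewrite -[1]/(1%:P) evC rmorph1. Qed.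

Lemma qev_mul z X Y : qev z (qmul X Y) = qmul (qev z X) (qev z Y).
Proof. by case: X => ????; case: Y => ????; rewrite /qev /qmul /= !(evD, evN, evM). Qed.
Lemma qev_conj z X : qev z (qconj X) = qconj (qev z X).
Proof. by case: X => ????; rewrite /qev /qconj /= !evN. Qed.
Lemma qev_add z X Y : qev z (qadd X Y) = qadd (qev z X) (qev z Y).
Proof. by case: X => ????; case: Y => ????; rewrite /qev /qadd /= !evD. Qed.
Lemma qev_opp z X : qev z (qopp X) = qopp (qev z X).
Proof. by case: X => ????; rewrite /qev /qopp /= !evN. Qed.
Lemma qev_scale z c X : qev z (qscale c X) = qscale (ev z c) (qev z X).
Proof. by case: X => ????; rewrite /qev /qscale /= !evM. Qed.
Lemma qev_k z : qev z (qk _) = qk _.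
Proof. by rewrite /qev /qk /= ev0 ev1. Qed.
Lemma qev_Bk z X Y : qev z (Bk X Y) = Bk (qev z X) (qev z Y).
Proof. by rewrite /Bk !qev_mul qev_conj qev_k. Qed.
Lemma qev_B1 z X Y : qev z (B1 X Y) = B1 (qev z X) (qev z Y).
Proof. by rewrite /B1 !qev_mul qev_conj. Qed.

Lemma ev_dvd (f r : {poly R}) z : size f = 3%N -> ev z f = 0 -> complex.Im z != 0 ->
  (f %| r) = (ev z r == 0).
Proof.
move=> sf fz Iz; have f0 : f != 0 by rewrite -size_poly_eq0 sf.
apply/idP/eqP.
  by move/divpK => <-; rewrite evM fz mulr0.
move=> rz; set m := r %% f.
have mz : ev z m = 0 by move: rz; rewrite {1}(divp_eq r f) evD evM fz mulr0 add0r.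
have sm : (size m < 3)%N by rewrite -sf ltn_modp.
have Em : m = (m`_0)%:P + (m`_1)%:P * 'X.
  apply/polyP => i; rewrite coefD coefC coefMX coefC.
  case: i => [|[|i]] /=; rewrite ?addr0 ?add0r //.
  by rewrite nth_default // -ltnS (leq_trans sm).
have m0 : m = 0.
  move: mz; rewrite Em evD evM !evC evX.
  move: (m`_0) (m`_1) Em => m0 m1 Em.
  case: z Iz {fz rz} => x y /= Iz.
  rewrite /real_complex_def.
  rewrite -[0 : C]/(0 +i* 0)%C.
  simpc => -[] e1 e2.
  have m10 : m1 = 0.
    by move: e2 => /eqP; rewrite mulf_eq0 (negbTE Iz) orbF => /eqP.
  move: e1; rewrite m10 mul0r addr0 => ->.
  by rewrite polyC0 mul0r addr0.
by rewrite (divp_eq r f) -/m m0 addr0 dvdp_mull.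
Qed.

Lemma exists_root (f : {poly R}) : size f = 3%N -> irreducible_poly f ->
  exists z, ev z f = 0 /\ complex.Im z != 0.
Proof.
move=> sf [_ irr].
have [z rz] : exists z, root (map_poly (real_complex R) f) z.
  by apply/closed_rootP; rewrite size_map_poly sf.
exists z; split; first exact/eqP.
apply/eqP => Iz.
have zE : z = ((complex.Re z)%:C)%C by rewrite [LHS]complexE Iz rmorph0 mulr0 addr0.
move: rz; rewrite zE /root horner_map fmorph_eq0 -/(root f (complex.Re z)) -dvdp_XsubCl.
have sX : size ('X - (complex.Re z)%:P) != 1%N by rewrite size_XsubC.
move=> H; have /eqp_size := irr _ sX H; by rewrite size_XsubC sf.
Qed.

Lemma qev0_dvd (f : {poly R}) z X : (forall r, (f %| r) = (ev z r == 0)) ->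
  qev z X = qzero _ -> [/\ f %| q0 X, f %| q1 X, f %| q2 X & f %| q3 X].
Proof.
move=> evd; case: X => a b c d; rewrite /qev /qzero /= => -[a0 b0 c0 d0].
by rewrite !evd a0 b0 c0 d0 eqxx.
Qed.

Lemma qev0_div (f : {poly R}) z X : (forall r, (f %| r) = (ev z r == 0)) ->
  qev z X = qzero _ -> X = qscale f (qdivf f X).
Proof.
move=> evd /(qev0_dvd evd); case: X => a b c d /= [a0 b0 c0 d0].
by rewrite /qscale /qdivf /= ![f * _]mulrC !divpK.
Qed.

End Ev.

Lemma finish (R : rcfType) (P1 D1 Lp Ld : hpoly R) (h1 : {poly R}) (k : R) :
  k != 0 -> h1 != 0 -> Lp <> qzero _ ->
  Bk P1 P1 = qscale (k%:P * h1) Lp ->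
  qopp (qadd (Bk P1 D1) (Bk D1 P1)) = qscale (k%:P * h1) Ld ->
  qadd (B1 P1 D1) (B1 D1 P1) = qzero _ ->
  exists Pt Dt : hpoly R, is_motion_poly Pt Dt /\ three_eqs Pt Dt Lp Ld h1.
Proof.
move=> k0 h10 Lp0 E1 E2 E3.
set s := (Num.sqrt `|k|)^-1.
have Hs : s * s * `|k| = 1.
  rewrite /s -invfM -expr2 sqr_sqrtr ?normr_ge0 // mulVf //.
  by rewrite normr_eq0.
have key : forall (Pt Dt : hpoly R),
  Bk Pt Pt = qscale h1 Lp ->
  qopp (qadd (Bk Pt Dt) (Bk Dt Pt)) = qscale h1 Ld ->
  qadd (B1 Pt Dt) (B1 Dt Pt) = qzero _ ->
  exists Pt Dt : hpoly R, is_motion_poly Pt Dt /\ three_eqs Pt Dt Lp Ld h1.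
  move=> Pt Dt F1 F2 F3; exists Pt, Dt.
  have Pt0 : Pt <> qzero _.
    move=> P0; apply: Lp0; apply: (qscale_eq0 h10).
    by rewrite -F1 P0 Bk00.
  by do !split.
have [kpos|kneg] := ltrP 0 k.
  apply: (key (qscale s%:P P1) (qscale s%:P D1)).
  - rewrite Bk_scale E1 qscaleA; congr qscale.
    by rewrite mulrA -!polyCM -(gtr0_norm kpos) Hs mul1r.
  - rewrite !Bk_scale -qscaleD -qscaleN E2 qscaleA; congr qscale.
    by rewrite mulrA -!polyCM -(gtr0_norm kpos) Hs mul1r.
  - by rewrite !B1_scale -qscaleD E3 qscale0.
have kneg' : k < 0 by rewrite lt_neqAle k0 kneg.
apply: (key (qmul (qscale s%:P P1) qi) (qmul (qscale s%:P D1) qi)).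
- rewrite Bk_i Bk_scale E1 qscaleA qscaleNl; congr qscale.
  by rewrite mulrA -!polyCM -mulNr -polyCN -mulrN -(ltr0_norm kneg') Hs mul1r.
- rewrite !Bk_i qoppD qoppK !Bk_scale -qscaleD -[qadd _ _]qoppK E2 qscaleNl qscaleA.
  congr qscale.
  by rewrite mulrN -mulNr mulrA -polyCM mulNr -mulrN -polyCN -polyCM -(ltr0_norm kneg') Hs mul1r.
- by rewrite !B1_i !B1_scale -qscaleD E3 qscale0.
Qed.

Theorem lemma7 (R : rcfType) (Lp Ld : hpoly R) (h f : {poly R}) (P D : hpoly R) :
  is_line_poly Lp Ld ->
  h != 0 ->
  is_motion_poly P D ->
  three_eqs P D Lp Ld h ->
  size f = 3%N ->
  irreducible_poly f ->
  f %| h %/ gcdp (rgcd Lp) h ->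
  ~~ (f ^+ 2 %| h) ->
  exists Pt Dt : hpoly R,
    is_motion_poly Pt Dt /\ three_eqs Pt Dt Lp Ld (h %/ f).
Proof.
move=> [_ [_ [_ Lp0]]] hn0 [Pn0 _] [E1 [E2 E3]] sf irrf fdiv nf2.
have E1' : Bk P P = qscale h Lp := E1.
have E2' : qopp (qadd (Bk P D) (Bk D P)) = qscale h Ld := E2.
have E3' : qadd (B1 P D) (B1 D P) = qzero _ := E3.
have f0 : f != 0 by rewrite -size_poly_eq0 sf.
have fh : f %| h by apply: dvdp_trans fdiv (divp_dvd (dvdp_gcdr _ _)).
set h1 := h %/ f.
have hE : h = h1 * f by rewrite /h1 divpK.
have h10 : h1 != 0 by apply: contra hn0 => /eqP h10; rewrite hE h10 mul0r.
have nfh1 : ~~ (f %| h1).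
  by apply: contra nf2 => fh1; rewrite hE expr2 (dvdp_mul fh1 (dvdpp f)).
have nfL : ~ [/\ f %| q0 Lp, f %| q1 Lp, f %| q2 Lp & f %| q3 Lp].
  move=> [d0 d1 d2 d3].
  have fr : f %| rgcd Lp.
    rewrite /rgcd; set g := gcdp _ _.
    have fg : f %| g by rewrite /g !dvdp_gcd d0 d1 d2 d3.
    have [->|l0] := eqVneq (lead_coef g) 0; first by rewrite invr0 scale0r dvdp0.
    by rewrite dvdpZr ?invr_eq0.
  have fG : f %| gcdp (rgcd Lp) h by rewrite dvdp_gcd fr fh.
  by move: nf2; rewrite -(divpK (dvdp_gcdr (rgcd Lp) h)) expr2 (dvdp_mul fdiv fG).
have [z [fz Iz]] := exists_root sf irrf.
have evd : forall r, (f %| r) = (ev z r == 0) := fun r => ev_dvd r sf fz Iz.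
have hz : ev z h = 0 by apply/eqP; rewrite -evd.
have Hpp : Bk (qev z P) (qev z P) = qzero _ by rewrite -qev_Bk E1' qev_scale hz qscale0l.
have Hpe : qadd (B1 (qev z P) (qev z D)) (B1 (qev z D) (qev z P)) = qzero _.
  by rewrite -!qev_B1 -qev_add E3' /qev /qzero /= ev0.
have Hke : qadd (Bk (qev z P) (qev z D)) (Bk (qev z D) (qev z P)) = qzero _.
  by rewrite -!qev_Bk -qev_add -[qadd _ _]qoppK E2' qev_opp qev_scale hz qscale0l qopp0.
have pn0 : qev z P <> qzero _.
  move=> p0; apply: nfL.
  have PE := qev0_div evd p0.
  set P0 := qdivf f P in PE.
  have : qscale f (Bk P0 P0) = qscale h1 Lp.
    apply: (qscale_inj f0); rewrite !qscaleA -Bk_scale -PE E1'.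
    by rewrite hE mulrC.
  move/(congr1 (qev z)); rewrite !qev_scale fz qscale0l => H.
  have h1z : ev z h1 != 0 by rewrite -evd.
  exact: qev0_dvd evd (qscale_eq0 h1z (esym H)).
have Hi : ('i * 'i = -1 :> R[i])%C by rewrite -expr2 sqr_i.
have H2C : (2 : R[i]) != 0 by rewrite pnatr_eq0.
have [s sv [pW eW]] := key_field Hi H2C Hpp Hpe Hke pn0.
have [sr [Hsr Hs]] : exists sr : R, sr * sr = 1 /\ s = (sr%:C)%C.
  case: sv => ->; [exists 1 | exists (-1)]; split.
  - by rewrite mulr1.
  - by rewrite rmorph1.
  - by rewrite mulrNN mulr1.
  - by rewrite rmorphN1.
set u := 'X - (complex.Re z)%:P; set w := (sr * complex.Im z)%:P.
set Qc := Quat u 0 0 (- w).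
have evu : ev z u = ('i * (complex.Im z)%:C)%C.
  by rewrite /u evD evN evX evC {1}(complexE z) addrC addKr.
have evQ : qev z Qc = qscale ((complex.Im z)%:C)%C (Quat 'i%C 0 0 (-s)).
  rewrite /qev /qscale /Qc /= evu ev0 evN /w evC Hs rmorphM; congr Quat; by [rewrite mulrC | rewrite mulr0 | rewrite mulrN mulrC].
have PQ0 : qev z (qmul P Qc) = qzero _ by rewrite qev_mul evQ qmul_scaler pW qscale0.
have DQ0 : qev z (qmul D Qc) = qzero _ by rewrite qev_mul evQ qmul_scaler eW qscale0.
have PQE := qev0_div evd PQ0. set P1 := qdivf f (qmul P Qc) in PQE.
have DQE := qev0_div evd DQ0. set D1 := qdivf f (qmul D Qc) in DQE.
set g := u ^+ 2 + w ^+ 2.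
have evg : ev z g = 0.
  rewrite /g evD !expr2 !evM evu /w evC rmorphM.
  have Hsr' : (sr%:C * sr%:C = 1)%C by rewrite -rmorphM Hsr rmorph1.
  ring: Hi Hsr'.
have sg : size g = 3%N.
  rewrite /g size_polyDl; first by rewrite size_exp_XsubC.
  by rewrite size_exp_XsubC /w -rmorphXn size_polyC; case: (_ != 0).
have fdg : f %| g by rewrite evd evg.
have fg : f %= g by rewrite -(dvdp_size_eqp fdg) sf sg.
have lf0 : lead_coef f != 0 by rewrite lead_coef_eq0.
have lg0 : lead_coef g != 0 by rewrite lead_coef_eq0 -size_poly_eq0 sg.
set k := lead_coef g / lead_coef f.
have k0 : k != 0 by rewrite mulf_neq0 ?invr_eq0.
have gE : g = k%:P * f.
  by rewrite mul_polyC /k mulrC -scalerA (eqp_eq fg) scalerA mulVf // scale1r.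
have ff0 : f * f != 0 by rewrite mulf_neq0.
have F1 : Bk P1 P1 = qscale (k%:P * h1) Lp.
  apply: (qscale_inj ff0).
  rewrite -Bk_scale -PQE Bk_Q -/g E1' gE hE !qscaleA; congr qscale; ring.
have F2 : qopp (qadd (Bk P1 D1) (Bk D1 P1)) = qscale (k%:P * h1) Ld.
  apply: (qscale_inj ff0).
  rewrite qscaleN qscaleD -!Bk_scale -PQE -DQE !Bk_Q -qscaleD -qscaleN -/g E2' gE hE !qscaleA.
  congr qscale; ring.
have F3 : qadd (B1 P1 D1) (B1 D1 P1) = qzero _.
  apply: (qscale_eq0 ff0).
  by rewrite qscaleD -!B1_scale -PQE -DQE !B1_Q -qscaleD E3' qscale0.
exact: finish k0 h10 Lp0 F1 F2 F3.
Qed.
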